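(* Let $\mathbb{F}_d$ be a field with the discrete topology, let $G$ be an effective ample Hausdorff groupoid, and let $\sigma\colon G^{(2)} \to \mathbb{F}_d^\times$ be a continuous $2$-cocycle. Then $A_{\mathbb{F}_d}(G,\sigma)$ is simple if and only if $G$ is minimal.
   Context: Groupoids are locally compact Hausdorff topological groupoids; $G$ is ample if it has a basis of compact open bisections; $G$ is effective if the interior of its isotropy $\{\gamma : r(\gamma) = s(\gamma)\}$ equals $G^{(0)}$. A subset $U \subseteq G^{(0)}$ is invariant if for all $\gamma\in G$, $s(\gamma)\in U \iff r(\gamma)\in U$; $G$ is minimal if $G^{(0)}$ has no open invariant subsets other than $\varnothing$ and $G^{(0)}$. A continuous $2$-cocycle is a continuous (locally constant) $\sigma\colon G^{(2)} \to \mathbb{F}_d^\times$ with $\sigma(\alpha,\beta)\sigma(\alpha\beta,\gamma) = \sigma(\alpha,\beta\gamma)\sigma(\beta,\gamma)$ and $\sigma(r(\gamma),\gamma)=1=\sigma(\gamma,s(\gamma))$. $A_{\mathbb{F}_d}(G,\sigma)$ is the $\mathbb{F}_d$-algebra of locally constant compactly supported functions $G\to\mathbb{F}_d$ with multiplication $(fg)(\gamma) = \sum_{\alpha\beta=\gamma}\sigma(\alpha,\beta)f(\alpha)g(\beta)$; simple means it has no two-sided ideals other than $\{0\}$ and itself. *)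

(* Defs.v *)
From HB Require Import structures.
From mathcomp Require Import all_boot all_order all_algebra.
From mathcomp Require Import all_classical all_reals all_analysis.
Set Implicit Arguments. Unset Strict Implicit. Unset Printing Implicit Defensive.
Import Order.TTheory GRing.Theory Num.Theory.
Local Open Scope classical_set_scope.
Local Open Scope ring_scope.

(* An (algebraic) groupoid on the carrier G: range r, source s, a product
   [mul a b] that is meaningful when s a = r b, and an inverse.  The unit
   space G^(0) is the set of elements fixed by r. *)
Record groupoid (G : Type) := Groupoid {
  gsrc : G -> G;
  grng : G -> G;
  gmul : G -> G -> G;
  ginv : G -> G;
  grng_rng : forall x, grng (grng x) = grng x;
  gsrc_rng : forall x, gsrc (grng x) = grng x;
  grng_src : forall x, grng (gsrc x) = gsrc x;
  gsrc_mul : forall a b, gsrc a = grng b -> gsrc (gmul a b) = gsrc b;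
  grng_mul : forall a b, gsrc a = grng b -> grng (gmul a b) = grng a;
  gmulA : forall a b c, gsrc a = grng b -> gsrc b = grng c ->
    gmul (gmul a b) c = gmul a (gmul b c);
  gmul_rngl : forall a, gmul (grng a) a = a;
  gmul_srcr : forall a, gmul a (gsrc a) = a;
  gsrc_inv : forall a, gsrc (ginv a) = grng a;
  grng_inv : forall a, grng (ginv a) = gsrc a;
  gmulV : forall a, gmul a (ginv a) = grng a;
  gmulVl : forall a, gmul (ginv a) a = gsrc a
}.

Section GroupoidDefs.
Context {G : topologicalType} (Gp : groupoid G).

Definition composable (a b : G) : Prop := gsrc Gp a = grng Gp b.
Definition G2 : set (G * G) := [set p | composable p.1 p.2].

Definition units : set G := [set x | grng Gp x = x].

Definition open_in_units (U : set G) : Prop :=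
  exists V : set G, open V /\ U = V `&` units.

Definition topological_groupoid : Prop :=
  continuous (gsrc Gp) /\ continuous (grng Gp) /\ continuous (ginv Gp) /\
  {within G2, continuous (fun p : G * G => gmul Gp p.1 p.2)}.

(* open bisection: open B on which r and s are homeomorphisms onto open
   subsets of G^(0) (continuity is global; we require injectivity on B and
   openness of the restrictions) *)
Definition open_bisection (B : set G) : Prop :=
  open B /\
  {in B &, injective (grng Gp)} /\ {in B &, injective (gsrc Gp)} /\
  (forall V, open V -> V `<=` B ->
     open_in_units (grng Gp @` V) /\ open_in_units (gsrc Gp @` V)).

Definition compact_open_bisection (B : set G) : Prop :=
  compact B /\ open_bisection B.

Definition ample : Prop :=
  forall (U : set G) (x : G), open U -> U x ->
    exists B, compact_open_bisection B /\ B x /\ B `<=` U.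

Definition isotropy : set G := [set g | grng Gp g = gsrc Gp g].

Definition effective : Prop := interior isotropy = units.

Definition invariant (U : set G) : Prop :=
  U `<=` units /\ forall g, (U (gsrc Gp g) <-> U (grng Gp g)).

Definition minimal : Prop :=
  forall U, open_in_units U -> invariant U -> U = set0 \/ U = units.

Variable F : fieldType.

(* continuous 2-cocycle G^(2) -> F_d^x, F_d discrete: continuity into a
   discrete space is local constancy on the subspace G^(2) of G x G *)
Definition cocycle (sigma : G -> G -> F) : Prop :=
  (forall a b, composable a b -> sigma a b != 0) /\
  (forall a b, composable a b ->
     exists W : set (G * G), open W /\ W (a, b) /\
       forall p, W p -> composable p.1 p.2 -> sigma p.1 p.2 = sigma a b) /\
  (forall a b c, composable a b -> composable b c ->
     sigma a b * sigma (gmul Gp a b) c = sigma a (gmul Gp b c) * sigma b c) /\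
  (forall g, sigma (grng Gp g) g = 1 /\ sigma g (gsrc Gp g) = 1).

(* locally constant (i.e. continuous into the discrete field) *)
Definition locally_constant (f : G -> F) : Prop :=
  forall x, exists W : set G, open W /\ W x /\ forall y, W y -> f y = f x.

Definition fsupport (f : G -> F) : set G := [set x | f x != 0].

Definition steinberg (f : G -> F) : Prop :=
  locally_constant f /\ compact (closure (fsupport f)).

Definition conv (sigma : G -> G -> F) (f g : G -> F) : G -> F :=
  fun gamma => \sum_(p \in [set p : G * G | composable p.1 p.2 /\ gmul Gp p.1 p.2 = gamma])
      (sigma p.1 p.2 * f p.1 * g p.2).

Definition ideal (sigma : G -> G -> F) (I : set (G -> F)) : Prop :=
  I `<=` steinberg /\ I (fun _ => 0) /\
  (forall f g, I f -> I g -> I (fun x => f x - g x)) /\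
  (forall f g, steinberg f -> I g -> I (conv sigma f g) /\ I (conv sigma g f)).

Definition simple_algebra (sigma : G -> G -> F) : Prop :=
  forall I, ideal sigma I -> I = [set (fun _ => 0)] \/ I = steinberg.

End GroupoidDefs.

(* Main.v *)
Require Import Defs.
From HB Require Import structures.
From mathcomp Require Import all_boot all_order all_algebra.
From mathcomp Require Import all_classical all_reals all_analysis.
From mathcomp Require Import finmap.
Import Order.TTheory GRing.Theory Num.Theory.
Local Open Scope classical_set_scope.
Local Open Scope ring_scope.

Definition ptt {T : topologicalType} (x : T) : Type := T.
HB.instance Definition _ (T : topologicalType) (x : T) := Topological.on (ptt x).
HB.instance Definition _ (T : topologicalType) (x : T) := isPointed.Build (ptt x) x.

Lemma my_cover (T : topologicalType) (A : set T) (I : choiceType) (D : set I) (f : I -> set T) :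
  compact A -> (forall i, D i -> open (f i)) -> A `<=` cover D f ->
  exists2 D' : {fset I}, {subset D' <= D} & A `<=` cover [set` D'] f.
Proof.
move=> cA fo AD.
have [->|/set0P[a Aa]] := eqVneq A set0.
  by exists fset0 => [i|x []]; rewrite ?inE.
have := @compact_cover (ptt a).
move=> /(congr1 (fun P => P A)) E.
have cA' : @compact (ptt a) A by [].
rewrite E in cA'.
exact: cA' I D f fo AD.
Qed.

Lemma prod_open_box (T U : topologicalType) (E : set (T * U)) a b :
  open E -> E (a, b) -> exists A B, [/\ open A, open B, A a, B b & A `*` B `<=` E].
Proof.
move=> oE Eab.
have : nbhs (a, b) E by apply: open_nbhs_nbhs.
case=> -[P Q] /= [nP nQ] PQE.
move: nP; rewrite nbhsE => -[A [oA Aa] AP].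
move: nQ; rewrite nbhsE => -[B [oB Bb] BQ].
exists A, B; split => // -[x y] [/= Ax By]; apply: PQE; split; [exact: AP|exact: BQ].
Qed.

Lemma open_setX (T U : topologicalType) (A : set T) (B : set U) :
  open A -> open B -> open (A `*` B).
Proof.
move=> oA oB; rewrite openE => -[x y] [/= Ax By].
rewrite /interior /=. exists (A, B) => //=; split; apply: open_nbhs_nbhs; split => //.
Qed.

Lemma within_cont_at (T U : topologicalType) (D : set T) (f : T -> U) p N :
  {within D, continuous f} -> D p -> open N -> N (f p) ->
  exists E, [/\ open E, E p & forall q, E q -> D q -> N (f q)].
Proof.
move=> cf Dp oN Nfp.
have := cf p N. rewrite /= nbhs_simpl.
move=> /(_ (open_nbhs_nbhs (conj oN Nfp))).
rewrite /= {1}/nbhs /= -nbhs_subspace_in //.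
rewrite /within /= nbhsE => -[E [oE Ep] EN].
by exists E; split => // q Eq Dq; apply: (EN q Eq Dq).
Qed.

Lemma open_ptwise (T : topologicalType) (A : set T) :
  (forall x, A x -> exists B, [/\ open B, B x & B `<=` A]) -> open A.
Proof.
move=> H; rewrite openE => x Ax; have [B [oB Bx BA]] := H x Ax.
rewrite /interior nbhsE; exists B => //; split => //.
Qed.

Arguments prod_open_box {T U E a b}.
Arguments within_cont_at {T U D f p N}.
Arguments open_setX {T U A B}.
Arguments my_cover {T A I D f}.

Section Main.
Context (F : fieldType) (G : topologicalType) (Gp : groupoid G) (sigma : G -> G -> F).
Local Notation r := (grng Gp).
Local Notation s := (gsrc Gp).
Local Notation m := (gmul Gp).
Local Notation iv := (ginv Gp).
Local Notation U0 := (units Gp).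

Lemma unit_r x : U0 (r x). Proof. exact: grng_rng. Qed.
Lemma unit_s x : U0 (s x). Proof. exact: grng_src. Qed.
Lemma units_s u : U0 u -> s u = u.
Proof. by rewrite /units /= => e; rewrite -{1}e gsrc_rng e. Qed.

Lemma ivK a : iv (iv a) = a.
Proof.
have e1 : s (iv (iv a)) = r (iv a) by rewrite gsrc_inv.
rewrite -[iv (iv a)](gmul_srcr Gp) e1 grng_inv -(gmulVl Gp a) -gmulA.
- by rewrite gmulVl gsrc_inv gmul_rngl.
- by rewrite gsrc_inv.
- by rewrite gsrc_inv.
Qed.

Lemma mulKl a b : s a = r b -> m (iv a) (m a b) = b.
Proof.
move=> e; rewrite -gmulA ?gsrc_inv // gmulVl e gmul_rngl //.
Qed.

Lemma mulKr a b : r a = r b -> m a (m (iv a) b) = b.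
Proof.
move=> e; rewrite -gmulA ?grng_inv ?gsrc_inv // gmulV e gmul_rngl //.
Qed.

Lemma unit_mull u b : U0 u -> s u = r b -> m u b = b.
Proof. by move=> Uu; rewrite units_s // => ->; rewrite gmul_rngl. Qed.

Lemma unit_mulr a u : U0 u -> s a = r u -> m a u = a.
Proof. by move=> Uu; rewrite Uu => <-; rewrite gmul_srcr. Qed.


Context (hT : hausdorff_space G) (tG : topological_groupoid Gp).

Lemma cont_r : continuous r. Proof. by case: tG => _ [? _]. Qed.
Lemma cont_s : continuous s. Proof. by case: tG => ? _. Qed.
Lemma cont_iv : continuous iv. Proof. by case: tG => _ [_ [? _]]. Qed.
Lemma cont_m : {within G2 Gp, continuous (fun p : G * G => m p.1 p.2)}.
Proof. by case: tG => _ [_ [_ ?]]. Qed.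

Lemma open_pre (f : G -> G) (A : set G) : continuous f -> open A -> open (f @^-1` A).
Proof. by move=> /continuousP; apply. Qed.

Lemma cclosed (K : set G) : compact K -> closed K.
Proof. exact: compact_closed. Qed.

Lemma closure_sub_closed (A B : set G) : closed B -> A `<=` B -> closure A `<=` B.
Proof. by move=> cB AB; rewrite [X in _ `<=` X](closure_id B).1 //; apply: closureS. Qed.

Lemma units_closed : closed U0.
Proof.
rewrite -openC; apply: open_ptwise => x nUx.
have nx : r x != x by apply/eqP.
move: hT; rewrite open_hausdorff => /(_ _ _ nx) [[A B] /= [rA xB] [oA oB /eqP AB0]].
exists (r @^-1` A `&` B); split.
- by apply: openI => //; apply: open_pre => //; exact: cont_r.
- by split; [move: rA | move: xB]; rewrite in_setE.
- move=> y [/= Ay By] Uy; have : (A `&` B) y by split => //; rewrite -Uy.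
  by rewrite AB0.
Qed.

Lemma image_compact (f : G -> G) (K : set G) : continuous f -> compact K -> compact (f @` K).
Proof. by move=> cf cK; apply: continuous_compact => //; exact: continuous_subspaceT. Qed.

Definition ind (A : set G) (a : F) : G -> F := fun x => if `[< A x >] then a else 0.

Lemma indT (A : set G) (a : F) x : A x -> ind A a x = a.
Proof. by move=> Ax; rewrite /ind asboolT. Qed.
Lemma indF (A : set G) (a : F) x : ~ A x -> ind A a x = 0.
Proof. by move=> Ax; rewrite /ind asboolF. Qed.

Lemma ind_steinberg (A : set G) (a : F) : compact A -> open A -> steinberg (ind A a).
Proof.
move=> cA oA; split.
  move=> x; have [Ax|nAx] := pselect (A x).
    by exists A; do 2?split => //; move=> y Ay; rewrite !indT.
  exists (~` A); do 2?split => //; first by apply: closed_openC; apply: cclosed.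
  by move=> y nAy; rewrite !indF.
apply: (subclosed_compact _ cA); first exact: closed_closure.
apply: closure_sub_closed; first exact: cclosed.
by move=> x; rewrite /fsupport /=; have [//|nAx] := pselect (A x); rewrite indF ?eqxx.
Qed.

Lemma steinberg_sub (f g : G -> F) : steinberg f -> steinberg g -> steinberg (fun x => f x - g x).
Proof.
move=> [lf cf] [lg cg]; split.
  move=> x; have [W1 [oW1 [W1x e1]]] := lf x; have [W2 [oW2 [W2x e2]]] := lg x.
  exists (W1 `&` W2); do 2?split => //; first exact: openI.
  by move=> y [/e1 -> /e2 ->].
apply: (subclosed_compact _ (compactU cf cg)); first exact: closed_closure.
apply: closure_sub_closed; first by apply: closedU; apply: cclosed.
move=> x; rewrite /fsupport /= => nz.
have [fx0|fx0] := eqVneq (f x) 0.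
  right; apply: subset_closure; rewrite /= ; apply: contra nz => /eqP ->.
  by rewrite fx0 subrr.
by left; apply: subset_closure.
Qed.

Lemma fsum_single (T : choiceType) (P : set T) (Fn : T -> F) p0 :
  P p0 -> (forall p, P p -> Fn p != 0 -> p = p0) -> \sum_(p \in P) Fn p = Fn p0.
Proof.
move=> Pp0 uniq.
rewrite -(fsbig_widen [set p0] P Fn); first by rewrite fsbig_set1.
  by move=> x ->.
move=> p [Pp /= np0]; apply/eqP; apply: contraT => nz; exfalso; apply: np0; exact: uniq.
Qed.

Lemma fsum_zero (T : choiceType) (P : set T) (Fn : T -> F) :
  (forall p, P p -> Fn p = 0) -> \sum_(p \in P) Fn p = 0.
Proof. exact: fsbig1. Qed.

Context (coc : cocycle Gp sigma).

Lemma sig_r g : sigma (r g) g = 1. Proof. by case: coc => _ [_ [_ /(_ g) []]]. Qed.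
Lemma sig_s g : sigma g (s g) = 1. Proof. by case: coc => _ [_ [_ /(_ g) []]]. Qed.
Lemma sig_nz a b : composable Gp a b -> sigma a b != 0. Proof. by case: coc => + _; apply. Qed.
Lemma sig_lc a b : composable Gp a b ->
  exists W : set (G * G), [/\ open W, W (a, b) &
    forall p, W p -> composable Gp p.1 p.2 -> sigma p.1 p.2 = sigma a b].
Proof.
move=> ab; case: coc => _ [/(_ a b ab) [W [oW [Wab HW]]] _].
by exists W; split.
Qed.

Local Notation cv := (Defs.conv Gp sigma).

Lemma convE (f g : G -> F) x : cv f g x =
  \sum_(p \in [set p : G * G | composable Gp p.1 p.2 /\ m p.1 p.2 = x])
      (sigma p.1 p.2 * f p.1 * g p.2).
Proof. by []. Qed.

Lemma conv_indl (V : set G) (a : F) (f : G -> F) x : V `<=` U0 ->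
  cv (ind V a) f x = ind V a (r x) * f x.
Proof.
move=> VU; rewrite convE (@fsum_single _ _ _ (r x, x)) /= ?sig_r ?mul1r //.
  by split => //=; [rewrite /composable gsrc_rng | rewrite gmul_rngl].
move=> [p1 p2] /= [cp <-] nz.
have Vp1 : V p1.
  by apply: contraPP nz => /indF ->; rewrite mulr0 mul0r eqxx.
have Up1 := VU _ Vp1.
have e2 : m p1 p2 = p2 by apply: unit_mull.
by rewrite e2 -cp units_s.
Qed.

Lemma conv_indr (V : set G) (a : F) (f : G -> F) x : V `<=` U0 ->
  cv f (ind V a) x = f x * ind V a (s x).
Proof.
move=> VU; rewrite convE (@fsum_single _ _ _ (x, s x)) /= ?sig_s ?mul1r //.
  by split => //=; [rewrite /composable grng_src | rewrite gmul_srcr].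
move=> [p1 p2] /= [cp <-] nz.
have Vp2 : V p2.
  by apply: contraPP nz => /indF ->; rewrite mulr0 eqxx.
have Up2 := VU _ Vp2.
have e2 : m p1 p2 = p1 by apply: unit_mulr.
by rewrite e2 cp Up2.
Qed.

Lemma comp_inv a x : r a = r x -> composable Gp (iv a) x.
Proof. by rewrite /composable gsrc_inv. Qed.

Lemma conv_bis (B : set G) (f g : G -> F) a x :
  {in B &, injective r} -> (forall y, f y != 0 -> B y) -> B a -> r a = r x ->
  cv f g x = sigma a (m (iv a) x) * f a * g (m (iv a) x).
Proof.
move=> injB sB Ba ea; rewrite convE (@fsum_single _ _ _ (a, m (iv a) x)) //=.
  split => /=; last exact: mulKr.
  by rewrite /composable grng_mul ?grng_inv //; exact: comp_inv.
move=> [p1 p2] /= [cp ex] nz.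
have Bp1 : B p1.
  by apply: sB; apply: contraNneq nz => ->; rewrite mulr0 mul0r.
have e1 : p1 = a.
  by apply: injB; rewrite ?in_setE // ea -ex grng_mul.
by subst p1; rewrite -ex mulKl.
Qed.

Lemma conv_bis0 (B : set G) (f g : G -> F) x :
  (forall y, f y != 0 -> B y) -> (forall a, B a -> r a <> r x) -> cv f g x = 0.
Proof.
move=> sB nB; rewrite convE; apply: fsum_zero => -[p1 p2] /= [cp ex].
have [->|nz] := eqVneq (f p1) 0; first by rewrite mulr0 mul0r.
by have := nB _ (sB _ nz); rewrite -ex grng_mul.
Qed.

Lemma lc_conv_bis (B : set G) (f g : G -> F) : compact B -> open_bisection Gp B ->
  locally_constant f -> (forall y, f y != 0 -> B y) -> locally_constant g ->
  locally_constant (cv f g).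
Proof.
move=> cB [oB [injr [_ imB]]] lf sB lg x0.
have [[a0 [Ba0 ea0]]|na] := pselect (exists a, B a /\ r a = r x0); last first.
  have cR : closed (r @` B) by apply: cclosed; apply: image_compact => //; exact: cont_r.
  exists (r @^-1` (~` (r @` B))); split.
    by apply: open_pre; [exact: cont_r | exact: closed_openC].
  split.
    by move=> [a Ba ea]; apply: na; exists a.
  move=> y ny; rewrite (@conv_bis0 B) //; last by move=> a Ba ea; apply: ny; exists a.
  by rewrite (@conv_bis0 B) // => a Ba ea; apply: na; exists a.
set b0 := m (iv a0) x0.
have cab : composable Gp a0 b0.
  by rewrite /composable grng_mul ?grng_inv //; exact: comp_inv.
have [Wf [oWf [Wfa ef]]] := lf a0.
have [Wg [oWg [Wgb eg]]] := lg b0.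
have [Ws [oWs Wsab es]] := sig_lc a0 b0 cab.
have [A1 [A2 [oA1 oA2 A1a A2b A12]]] := prod_open_box oWs Wsab.
have G2i : G2 Gp (iv a0, x0) by exact: comp_inv.
have [E [oE Ep EN]] := within_cont_at cont_m G2i (openI oWg oA2) (conj Wgb A2b).
have [E1 [E2 [oE1 oE2 E1a E2x E12]]] := prod_open_box oE Ep.
set O := Wf `&` A1 `&` (iv @^-1` E1) `&` B.
have oO : open O.
  by repeat apply: openI => //; apply: open_pre => //; exact: cont_iv.
have Oa : O a0 by [].
have [Z [oZ eZ]] := (imB O oO (fun y Oy => Oy.2)).1.
have Zr : Z (r x0).
  have : (r @` O) (r x0) by exists a0.
  by rewrite eZ => -[].
exists (E2 `&` r @^-1` Z); split.
  by apply: openI => //; apply: open_pre => //; exact: cont_r.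
split; first by split.
move=> y [E2y Zy].
have : (r @` O) (r y) by rewrite eZ; split => //; exact: unit_r.
case=> a [[[Wfa' A1a'] E1a'] Ba] ea.
rewrite (@conv_bis B _ _ _ _ injr sB Ba ea) (@conv_bis B _ _ _ _ injr sB Ba0 ea0).
have Gq : G2 Gp (iv a, y) by exact: comp_inv.
have [Wgb' A2b'] := EN (iv a, y) (E12 (iv a, y) (conj E1a' E2y)) Gq.
have cab' : composable Gp a (m (iv a) y).
  by rewrite /composable grng_mul ?grng_inv //; exact: comp_inv.
have -> : sigma a (m (iv a) y) = sigma a0 b0.
  by apply: (es (a, m (iv a) y)) => //; apply: A12; split.
by rewrite (ef a Wfa') (eg _ Wgb').
Qed.

Lemma lc_const (c : F) : locally_constant (fun _ : G => c).
Proof. by move=> x; exists setT; split => //; exact: openT. Qed.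

Lemma lc_add (f1 f2 : G -> F) : locally_constant f1 -> locally_constant f2 ->
  locally_constant (fun y => f1 y + f2 y).
Proof.
move=> l1 l2 x; have [W1 [oW1 [W1x e1]]] := l1 x; have [W2 [oW2 [W2x e2]]] := l2 x.
exists (W1 `&` W2); split; first exact: openI.
by split => // y [/e1 -> /e2 ->].
Qed.

Lemma lc_if (C : set G) (h1 h2 : G -> F) : open C -> closed C ->
  locally_constant h1 -> locally_constant h2 ->
  locally_constant (fun y => if `[< C y >] then h1 y else h2 y).
Proof.
move=> oC cC l1 l2 x; have [W1 [oW1 [W1x e1]]] := l1 x; have [W2 [oW2 [W2x e2]]] := l2 x.
have [Cx|nCx] := pselect (C x).
  exists (W1 `&` C); split; first exact: openI.
  by split => // y [/e1 -> Cy]; rewrite !asboolT.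
exists (W2 `&` ~` C); split; first by apply: openI => //; exact: closed_openC.
by split => // y [/e2 -> Cy]; rewrite !asboolF.
Qed.

Definition TS (f : G -> F) x :=
  [set p : G * G | (composable Gp p.1 p.2 /\ m p.1 p.2 = x) /\ f p.1 != 0].

Lemma conv_add (f1 f2 g : G -> F) x : finite_set (TS f1 x) -> finite_set (TS f2 x) ->
  cv (fun y => f1 y + f2 y) g x = cv f1 g x + cv f2 g x.
Proof.
move=> fin1 fin2.
set P := [set p : G * G | composable Gp p.1 p.2 /\ m p.1 p.2 = x].
set A := TS f1 x `|` TS f2 x.
have AP : A `<=` P by move=> p [[]|[]].
have finA : finite_set A by rewrite finite_setU.
have wid (h : G * G -> F) : (forall p, P p -> ~ A p -> h p = 0) ->
    \sum_(p \in P) h p = \sum_(p \in A) h p.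
  move=> H; rewrite (fsbig_widen A P h) //.
  by move=> p [Pp nAp]; rewrite /= H.
have z1 p : P p -> ~ A p -> f1 p.1 = 0.
  by move=> Pp nAp; apply/eqP; apply: contraT => nz; exfalso; apply: nAp; left; split.
have z2 p : P p -> ~ A p -> f2 p.1 = 0.
  by move=> Pp nAp; apply/eqP; apply: contraT => nz; exfalso; apply: nAp; right; split.
rewrite !convE -/P !wid.
- rewrite -fsbig_split //; apply: eq_fsbigr => p _.
  by rewrite mulrDr mulrDl.
- by move=> p Pp nAp; rewrite z2 // mulr0 mul0r.
- by move=> p Pp nAp; rewrite z1 // mulr0 mul0r.
- by move=> p Pp nAp; rewrite z1 // z2 // addr0 mulr0 mul0r.
Qed.

Lemma TS_bis (B : set G) (f : G -> F) x : {in B &, injective r} ->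
  (forall y, f y != 0 -> B y) -> finite_set (TS f x).
Proof.
move=> injB sB.
have [[p0 Tp0]|nT] := pselect (exists p, TS f x p); last first.
  apply: (@sub_finite_set _ _ set0); last exact: finite_set0.
  by move=> p Tp; apply: nT; exists p.
apply: (@sub_finite_set _ _ [set p0]); last exact: finite_set1.
have key p : TS f x p -> p = (p.1, m (iv p.1) x) /\ B p.1 /\ r p.1 = r x.
  move=> [[cp ex] nz]; split; last split.
  - by rewrite -ex mulKl // -surjective_pairing.
  - exact: sB.
  - by rewrite -ex grng_mul.
move=> p Tp; have [e1 [B1 r1]] := key p Tp; have [e0 [B0 r0]] := key p0 Tp0.
have e : p.1 = p0.1 by apply: injB; rewrite ?in_setE // r1 r0.
by rewrite /= e1 e0 e.
Qed.

Lemma lc_conv_list (g : G -> F) (lg : locally_constant g) (L : seq (set G)) :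
  (forall B, B \in L -> compact B /\ open_bisection Gp B) ->
  forall f, locally_constant f -> (forall y, f y != 0 -> exists2 B, B \in L & B y) ->
  locally_constant (cv f g) /\ forall x, finite_set (TS f x).
Proof.
elim: L => [|B L IH] HL f lf sf.
  have f0 y : f y = 0 by apply/eqP; apply: contraT => /sf [B]; rewrite in_nil.
  have c0 x : cv f g x = 0.
    by rewrite convE; apply: fsum_zero => p _; rewrite f0 mulr0 mul0r.
  split.
    by move=> x; exists setT; split; [exact: openT | split => // y _; rewrite !c0].
  move=> x; apply: (@sub_finite_set _ _ set0); last exact: finite_set0.
  by move=> p [_]; rewrite f0 eqxx.
have [cB bB] := HL B (mem_head _ _).
have oB : open B by case: bB.
have clB : closed B by exact: cclosed.
have injB : {in B &, injective r} by case: bB => _ [].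
set f1 := fun y => if `[< B y >] then f y else 0.
set f2 := fun y => if `[< B y >] then 0 else f y.
have fE : f = fun y => f1 y + f2 y.
  apply: funext => y; rewrite /f1 /f2; case: `[< B y >]; by rewrite ?addr0 ?add0r.
have lf1 : locally_constant f1 by apply: lc_if => //; exact: lc_const.
have lf2 : locally_constant f2 by apply: lc_if => //; exact: lc_const.
have sf1 y : f1 y != 0 -> B y.
  by rewrite /f1; have [//|nB] := pselect (B y); rewrite asboolF // eqxx.
have sf2 y : f2 y != 0 -> exists2 B', B' \in L & B' y.
  rewrite /f2; have [By|nB] := pselect (B y); first by rewrite asboolT // eqxx.
  rewrite asboolF // => /sf [B' B'in B'y]; exists B' => //.
  move: B'in; rewrite in_cons => /orP [/eqP eB|//].
  by exfalso; apply: nB; rewrite -eB.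
have HL' B' : B' \in L -> compact B' /\ open_bisection Gp B'.
  by move=> B'in; apply: HL; rewrite in_cons B'in orbT.
have [lc2 fin2] := IH HL' f2 lf2 sf2.
have fin1 x : finite_set (TS f1 x) by exact: (@TS_bis B f1 x injB sf1).
have lc1 : locally_constant (cv f1 g) by exact: (@lc_conv_bis B f1 g cB bB lf1 sf1 lg).
rewrite fE; split.
  have -> : cv (fun y => f1 y + f2 y) g = fun x => cv f1 g x + cv f2 g x.
    by apply: funext => x; rewrite conv_add.
  exact: lc_add.
move=> x; apply: (@sub_finite_set _ _ (TS f1 x `|` TS f2 x)).
  move=> p [P12 nz]; have [z1|nz1] := eqVneq (f1 p.1) 0.
    by right; split => //; move: nz; rewrite z1 add0r.
  by left.
by rewrite finite_setU.
Qed.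

Lemma G2_closed : closed (G2 Gp).
Proof.
rewrite -openC; apply: open_ptwise => -[a b] /= nab.
have nx : s a != r b by apply/eqP.
move: hT; rewrite open_hausdorff => /(_ _ _ nx) [[A B] /= [sA rB] [oA oB /eqP AB0]].
exists ((s @^-1` A) `*` (r @^-1` B)); split.
- by apply: open_setX; apply: open_pre => //; [exact: cont_s | exact: cont_r].
- by split; [move: sA | move: rB]; rewrite /= in_setE.
- move=> [y z] [/= Ay Bz] cyz; have : (A `&` B) (s y) by split => //; rewrite cyz.
  by rewrite AB0.
Qed.

Lemma fsum_nz (T : choiceType) (P : set T) (Fn : T -> F) :
  \sum_(p \in P) Fn p != 0 -> exists2 p, P p & Fn p != 0.
Proof.
move=> nz; apply: contrapT => nE; move: nz; rewrite fsum_zero ?eqxx // => p Pp.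
by apply/eqP; apply: contraT => nz; exfalso; apply: nE; exists p.
Qed.

Lemma conv_compact (f g : G -> F) : steinberg f -> steinberg g ->
  compact (closure (fsupport (cv f g))).
Proof.
move=> [_ cf] [_ cg].
set M := (closure (fsupport f) `*` closure (fsupport g)) `&` G2 Gp.
have cM : compact M by apply: compact_closedI; [exact: compact_setX | exact: G2_closed].
have cI : compact ((fun p : G * G => m p.1 p.2) @` M).
  by apply: continuous_compact => //; apply: (continuous_subspaceW _ cont_m) => p [].
apply: (subclosed_compact _ cI); first exact: closed_closure.
apply: closure_sub_closed; first exact: cclosed.
move=> x /fsum_nz [[a b] /= [cab eab] nz].
exists (a, b) => //; split; last exact: cab.
split => /=; apply: subset_closure; rewrite /fsupport /=.
  by apply: contraNneq nz => ->; rewrite mulr0 mul0r.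
by apply: contraNneq nz => ->; rewrite mulr0.
Qed.

Context (amp : ample Gp).

Lemma conv_lc (f g : G -> F) : steinberg f -> locally_constant g ->
  locally_constant (cv f g).
Proof.
move=> [lf cf] lg.
set D := [set B : set G | compact_open_bisection Gp B].
have cov : closure (fsupport f) `<=` cover D id.
  move=> x _; have [B [cobB [Bx _]]] := amp setT x openT I.
  by exists B.
have [D' sD' cov'] := my_cover cf (fun B (DB : D B) => DB.2.1) cov.
have HL B : B \in (D' : seq _) -> compact B /\ open_bisection Gp B.
  by move=> /sD'; rewrite in_setE.
have sf y : f y != 0 -> exists2 B, B \in (D' : seq _) & B y.
  move=> nz; have /cov' [B D'B By] : closure (fsupport f) y by apply: subset_closure.
  by exists B.
exact: (lc_conv_list g lg D' HL f lf sf).1.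
Qed.

Lemma conv_steinberg (f g : G -> F) : steinberg f -> steinberg g -> steinberg (cv f g).
Proof.
move=> sf sg; split; first exact: conv_lc sf sg.1.
exact: conv_compact.
Qed.

Lemma steinberg0 : steinberg (fun _ : G => 0 : F).
Proof.
split; first exact: lc_const.
apply: (subclosed_compact _ compact0); first exact: closed_closure.
by apply: closure_sub_closed; [exact: closed0 | move=> x; rewrite /fsupport /= eqxx].
Qed.

Context (eff : effective Gp).

Lemma units_open : open U0.
Proof. by rewrite -eff; exact: open_interior. Qed.

Lemma simple_minimal : simple_algebra Gp sigma -> minimal Gp.
Proof.
move=> simp Uu oU [UU invg].
set I := [set f : G -> F | steinberg f /\ forall x, f x != 0 -> Uu (s x)].
have idI : ideal Gp sigma I.
  split; first by move=> f [].
  split; first by split; [exact: steinberg0 | move=> x; rewrite eqxx].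
  split.
    move=> f g [sf Hf] [sg Hg]; split; first exact: steinberg_sub.
    move=> x nz; have [fz|fnz] := eqVneq (f x) 0; last exact: Hf.
    by apply: Hg; apply: contraNneq nz => ->; rewrite fz subrr.
  move=> f g sf [sg Hg]; split; split; try exact: conv_steinberg.
    move=> x /fsum_nz [[a b] /= [cab <-] nz].
    rewrite gsrc_mul //; apply: Hg; apply: contraNneq nz => ->; rewrite mulr0 //.
  move=> x /fsum_nz [[a b] /= [cab <-] nz].
  rewrite gsrc_mul //; apply/invg; rewrite -cab; apply: Hg.
  by apply: contraNneq nz => ->; rewrite mulr0 mul0r.
case: (simp I idI) => [I0|Ist].
  left; apply/seteqP; split => // u Uu_u; exfalso.
  case: oU => V [oV eV].
  have VUu : (V `&` U0) u by rewrite -eV.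
  have [B [[cB [oB _]] [Bu BVU]]] := amp (V `&` U0) u (openI oV units_open) VUu.
  have : I (ind B 1).
    split; first exact: ind_steinberg.
    move=> x nz; have Bx : B x by apply: contraPP nz => /indF ->; rewrite eqxx.
    have [Vx Ux] := BVU x Bx; rewrite units_s // eV; by split.
  rewrite I0 /= => /(congr1 (fun h => h u)); rewrite indT // => /eqP.
  by rewrite oner_eq0.
right; apply/seteqP; split => // u Uu0.
have [B [[cB [oB _]] [Bu _]]] := amp setT u openT Logic.I.
have : I (ind B 1) by rewrite Ist; exact: ind_steinberg.
case=> _ /(_ u); rewrite indT // oner_eq0 units_s //; exact.
Qed.

Lemma shrink_one (B W : set G) : open B -> {in B &, injective s} ->
  (forall V, open V -> V `<=` B -> open_in_units Gp (s @` V)) -> B `<=` ~` U0 ->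
  open W -> W !=set0 -> W `<=` U0 ->
  exists V, [/\ open V, V !=set0, V `<=` W & forall g, B g -> ~ (V (r g) /\ V (s g))].
Proof.
move=> oB injs imB BU oW [w Ww] WU.
have [[g0 [Bg0 Wg0]]|nB] := pselect (exists g, B g /\ W (s g)); last first.
  exists W; split => //; first by exists w.
  by move=> g Bg [_ Wsg]; apply: nB; exists g.
set B' := B `&` s @^-1` W.
have oB' : open B' by apply: openI => //; apply: open_pre => //; exact: cont_s.
have [d [[Bd Wsd] nd]] : exists d, B' d /\ r d <> s d.
  apply: contrapT => nE.
  have B'iso : B' `<=` isotropy Gp.
    move=> y B'y; apply: contrapT => ny; apply: nE; exists y; split => //.
  have : (isotropy Gp)° g0.
    apply: (filterS B'iso); apply: open_nbhs_nbhs; split => //.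
  rewrite eff => Ug0; exact: (BU g0 Bg0 Ug0).
have nx : r d != s d by apply/eqP.
move: hT; rewrite open_hausdorff => /(_ _ _ nx) [[P Q] /= [rP sQ] [oP oQ /eqP PQ0]].
set B'' := B' `&` r @^-1` P `&` s @^-1` Q.
have oB'' : open B''.
  apply: openI; first apply: openI => //.
    by apply: open_pre => //; exact: cont_r.
  by apply: open_pre => //; exact: cont_s.
have [Z [oZ eZ]] := imB B'' oB'' (fun y By => By.1.1.1).
exists (s @` B''); split.
- by rewrite eZ; exact: openI oZ units_open.
- exists (s d); exists d => //; split; first split => //.
    by move: rP; rewrite in_setE.
  by move: sQ; rewrite in_setE.
- by move=> _ [y [[[By Wy] _] _] <-].
- move=> g Bg [[y [[[By _] Py] Qy] ey] [y' [[[By' _] Py'] _] ey']].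
  have egy : g = y' by apply: injs; rewrite ?in_setE.
  have : (P `&` Q) (r g) by split; [rewrite egy | rewrite -ey].
  by rewrite PQ0.
Qed.

Lemma shrink_list (L : seq (set G)) (W : set G) :
  (forall B, B \in L -> open_bisection Gp B /\ B `<=` ~` U0) ->
  open W -> W !=set0 -> W `<=` U0 ->
  exists V, [/\ open V, V !=set0, V `<=` W &
    forall B g, B \in L -> B g -> ~ (V (r g) /\ V (s g))].
Proof.
elim: L W => [|B L IH] W HL oW nW WU.
  by exists W; split => // B g; rewrite in_nil.
have [[oB [_ [injs imB]]] BU] := HL B (mem_head _ _).
have [V1 [oV1 nV1 V1W HV1]] :=
  shrink_one B W oB injs (fun V oV VB => (imB V oV VB).2) BU oW nW WU.
have HL' B' : B' \in L -> open_bisection Gp B' /\ B' `<=` ~` U0.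
  by move=> B'in; apply: HL; rewrite in_cons B'in orbT.
have [V [oV nV VV1 HV]] := IH V1 HL' oV1 nV1 (subset_trans V1W WU).
exists V; split => //; first exact: subset_trans VV1 V1W.
move=> B' g; rewrite in_cons => /orP [/eqP -> Bg [rV sV]|B'in B'g].
  by apply: (HV1 g Bg); split; apply: VV1.
exact: HV B' g B'in B'g.
Qed.

Lemma unit_ind (I : set (G -> F)) (h : G -> F) x : ideal Gp sigma I -> I h ->
  U0 x -> h x != 0 ->
  exists V0, [/\ compact V0, open V0, V0 `<=` U0, V0 !=set0 & I (ind V0 1)].
Proof.
move=> [IS [_ [_ Iconv]]] Ih Ux hx.
have [lh ch] := IS h Ih.
have [W [oW [Wx eW]]] := lh x.
set K := closure (fsupport h) `&` ~` U0.
have cK : compact K.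
  by apply: compact_closedI => //; apply: open_closedC; exact: units_open.
set D := [set B : set G | compact_open_bisection Gp B /\ B `<=` ~` U0].
have cov : K `<=` cover D id.
  move=> y [_ nUy].
  have oC : open (~` U0) by apply: closed_openC; exact: units_closed.
  have [B [cobB [By BU]]] := amp (~` U0) y oC nUy.
  by exists B.
have [D' sD' cov'] := my_cover cK (fun B (DB : D B) => DB.1.2.1) cov.
have HL B : B \in (D' : seq _) -> open_bisection Gp B /\ B `<=` ~` U0.
  by move=> /sD'; rewrite in_setE => -[[_ ?] ?].
have oWU : open (W `&` U0) by apply: openI => //; exact: units_open.
have [V [oV [y Vy] VW HV]] :=
  shrink_list D' (W `&` U0) HL oWU (ex_intro _ x (conj Wx Ux)) (fun _ p => p.2).
have [V0 [[cV0 [oV0 _]] [V0y V0V]]] := amp V y oV Vy.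
have V0U : V0 `<=` U0 by move=> z /V0V /VW [].
have V0W : V0 `<=` W by move=> z /V0V /VW [].
set c := h x.
have key : cv (cv (ind V0 c^-1) h) (ind V0 1) = ind V0 1.
  apply: funext => z; rewrite conv_indr // conv_indl //.
  have [[rz sz]|nb] := pselect (V0 (r z) /\ V0 (s z)).
    rewrite (indT _ _ _ rz) (indT _ _ _ sz) mulr1.
    have [Uz|nUz] := pselect (U0 z).
      have V0z : V0 z by rewrite -Uz.
      by rewrite indT // eW //; [rewrite mulVf | exact: V0W].
    rewrite indF; last by move=> /V0U.
    have -> : h z = 0.
      apply/eqP; apply: contraT => nz; exfalso.
      have Kz : K z by split => //; apply: subset_closure.
      have [B D'B Bz] := cov' z Kz.
      by apply: (HV B z D'B Bz); split; apply: V0V.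
    by rewrite mulr0.
  have nV0z : ~ V0 z.
    move=> V0z; apply: nb; have Uz := V0U z V0z.
    by rewrite Uz units_s.
  rewrite (indF _ _ _ nV0z).
  have [rz|nrz] := pselect (V0 (r z)).
    have nsz : ~ V0 (s z) by move=> sz; apply: nb.
    by rewrite (indF _ _ _ nsz) mulr0.
  by rewrite (indF _ _ _ nrz) mul0r mul0r.
exists V0; split => //; first by exists y.
rewrite -key.
have I1 : I (cv (ind V0 c^-1) h) by apply: (Iconv _ _ (ind_steinberg V0 c^-1 cV0 oV0) Ih).1.
exact: (Iconv _ _ (ind_steinberg V0 1 cV0 oV0) I1).2.
Qed.

Lemma mulKr' a b : s a = r b -> m (m a b) (iv b) = a.
Proof.
move=> e; rewrite gmulA ?grng_inv // gmulV -e gmul_srcr //.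
Qed.

Lemma to_unit (I : set (G -> F)) (f : G -> F) g0 : ideal Gp sigma I -> I f ->
  f g0 != 0 -> exists h x, [/\ I h, U0 x & h x != 0].
Proof.
move=> [IS [_ [_ Iconv]]] If fg0.
have [C [[cC [oC [_ [injs _]]]] [Cg _]]] := amp setT (iv g0) openT Logic.I.
exists (cv f (ind C 1)), (r g0); split.
- exact: (Iconv _ _ (ind_steinberg C 1 cC oC) If).2.
- exact: unit_r.
rewrite convE (@fsum_single _ _ _ (g0, iv g0)) /=.
- rewrite indT // mulr1; apply: mulf_neq0 => //; apply: sig_nz.
  by rewrite /composable grng_inv.
- by split => //=; [rewrite /composable grng_inv | rewrite gmulV].
move=> [p1 p2] /= [cp ex] nz.
have Cp2 : C p2 by apply: contraPP nz => /indF ->; rewrite mulr0 eqxx.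
have e2 : p2 = iv g0.
  by apply: injs; rewrite ?in_setE // gsrc_inv -(gsrc_mul cp) ex gsrc_rng.
have e1 : p1 = g0.
  by have := mulKr' p1 p2 cp; rewrite ex e2 ivK gmul_rngl.
by rewrite e1 e2.
Qed.

Lemma ind_union (I : set (G -> F)) (A B : set G) : ideal Gp sigma I ->
  A `<=` U0 -> B `<=` U0 -> steinberg (ind A 1) -> I (ind B 1) ->
  I (ind A 1) -> I (ind (A `|` B) 1).
Proof.
move=> [IS [_ [Isub Iconv]]] AU BU sA IB IA.
have I1 : I (cv (ind A 1) (ind B 1)) by exact: (Iconv _ _ sA IB).1.
have I2 := Isub _ _ I1 IB.
have I3 := Isub _ _ IA I2.
suff -> : ind (A `|` B) 1 = (fun x => ind A 1 x - (cv (ind A 1) (ind B 1) x - ind B 1 x)) by [].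
apply: funext => x; rewrite conv_indl //.
have [Bx|nBx] := pselect (B x).
  have -> : r x = x by exact: BU.
  rewrite (indT _ _ _ Bx) mulr1 [LHS]indT; last by right.
  by rewrite opprB addrC subrK.
rewrite (indF _ _ _ nBx) mulr0 subr0 subr0.
have [Ax|nAx] := pselect (A x).
  by rewrite !indT //; left.
by rewrite !indF // => -[].
Qed.

Lemma lc_siginv : locally_constant (fun a : G => (sigma a (iv a))^-1).
Proof.
move=> a.
have ca : composable Gp a (iv a) by rewrite /composable grng_inv.
have [Ws [oWs Wsa es]] := sig_lc a (iv a) ca.
have [A1 [A2 [oA1 oA2 A1a A2a A12]]] := prod_open_box oWs Wsa.
exists (A1 `&` iv @^-1` A2); split.
  by apply: openI => //; apply: open_pre => //; exact: cont_iv.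
split; first by split.
move=> y [A1y A2y].
have cy : composable Gp y (iv y) by rewrite /composable grng_inv.
have -> : sigma y (iv y) = sigma a (iv a).
  by apply: (es (y, iv y)) => //; apply: A12; split.
by [].
Qed.

Lemma iv_image (C : set G) : iv @` C = iv @^-1` C.
Proof.
apply/seteqP; split => x.
  by case=> c Cc <-; rewrite /preimage /= ivK.
by move=> Cx; exists (iv x) => //; rewrite ivK.
Qed.

Lemma ind_rC (I : set (G -> F)) (V0 C : set G) : ideal Gp sigma I -> I (ind V0 1) ->
  V0 `<=` U0 -> compact_open_bisection Gp C -> C `<=` s @^-1` V0 -> I (ind (r @` C) 1).
Proof.
move=> [IS [_ [_ Iconv]]] IV VU [cC [oC [injr [injs _]]]] CV.
set fC := fun a => if `[< C a >] then (sigma a (iv a))^-1 else 0.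
have clC : closed C by exact: cclosed.
have sfC : steinberg fC.
  split; first by apply: lc_if => //; [exact: lc_siginv | exact: lc_const].
  apply: (subclosed_compact _ cC); first exact: closed_closure.
  apply: closure_sub_closed => // y; rewrite /fsupport /fC /=.
  by have [//|nC] := pselect (C y); rewrite asboolF // eqxx.
set Ci := iv @` C.
have cCi : compact Ci by apply: image_compact => //; exact: cont_iv.
have oCi : open Ci by rewrite /Ci iv_image; apply: open_pre => //; exact: cont_iv.
have E1 : cv fC (ind V0 1) = fC.
  apply: funext => z; rewrite conv_indr //.
  rewrite /fC; have [Cz|nCz] := pselect (C z).
    by rewrite asboolT // indT ?mulr1 //; exact: CV.
  by rewrite asboolF // mul0r.
have I1 : I fC by rewrite -E1; exact: (Iconv _ _ sfC IV).1.
have I2 : I (cv fC (ind Ci 1)) by exact: (Iconv _ _ (ind_steinberg Ci 1 cCi oCi) I1).2.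
suff <- : cv fC (ind Ci 1) = ind (r @` C) 1 by [].
apply: funext => z.
have key p : composable Gp p.1 p.2 -> sigma p.1 p.2 * fC p.1 * ind Ci 1 p.2 != 0 ->
    C p.1 /\ p.2 = iv p.1.
  move=> cp nz.
  have Cp1 : C p.1.
    by apply: contraPP nz => nC; rewrite /fC asboolF // mulr0 mul0r eqxx.
  have [c Cc ec] : Ci p.2 by apply: contraPP nz => nC; rewrite indF // mulr0 eqxx.
  have e : p.1 = c by apply: injs; rewrite ?in_setE // cp -ec grng_inv.
  by split => //; rewrite -ec e.
have [[a Ca <-]|nz] := pselect ((r @` C) z).
  rewrite [RHS]indT; last by exists a.
  rewrite convE (@fsum_single _ _ _ (a, iv a)) /=.
  - rewrite /fC asboolT // indT; last by exists a.
    by rewrite mulr1 mulfV // sig_nz // /composable grng_inv.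
  - by split => //=; [rewrite /composable grng_inv | rewrite gmulV].
  move=> p [cp ep] nz; have [Cp1 e2] := key p cp nz.
  have e1 : p.1 = a.
    by apply: injr; rewrite ?in_setE // -(grng_mul cp) ep grng_rng.
  by rewrite [p]surjective_pairing e2 e1.
rewrite [RHS]indF // convE; apply: fsum_zero => p [cp ep].
apply/eqP; apply: contraT => nz'; exfalso; have [Cp1 e2] := key p cp nz'.
by apply: nz; exists p.1 => //; rewrite -ep e2 gmulV.
Qed.

Lemma rC_open (C : set G) : open_bisection Gp C -> open (r @` C).
Proof.
move=> [oC [_ [_ imB]]]; have [Z [oZ ->]] := (imB C oC (fun _ x => x)).1.
by apply: openI => //; exact: units_open.
Qed.

Lemma cover_units (I : set (G -> F)) (V0 : set G) : ideal Gp sigma I -> minimal Gp ->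
  open V0 -> V0 `<=` U0 -> V0 !=set0 -> I (ind V0 1) ->
  forall S, compact S -> S `<=` U0 ->
  exists W, [/\ compact W, open W, W `<=` U0, S `<=` W & I (ind W 1)].
Proof.
move=> idI mini oV0 V0U [v0 V0v0] IV S cS SU.
have oP : open (s @^-1` V0) by apply: open_pre => //; exact: cont_s.
set Uu := [set u | U0 u /\ exists g, V0 (s g) /\ r g = u].
have oUu : open Uu.
  apply: open_ptwise => u [Uu_u [g [Vsg rg]]].
  have [B [[cB bB] [Bg BP]]] := amp (s @^-1` V0) g oP Vsg.
  have [oB [_ [_ imB]]] := bB.
  have [Z [oZ eZ]] := (imB B oB (fun _ x => x)).1.
  exists (Z `&` U0); split.
  - apply: openI => //; exact: units_open.
  - by rewrite -eZ -rg; exists g.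
  - move=> v; rewrite -eZ => -[b Bb <-]; split; first exact: unit_r.
    by exists b; split => //; exact: BP.
have invU : Defs.invariant Gp Uu.
  split; first by move=> u [].
  move=> g; split.
    move=> [_ [c [Vc rc]]]; split; first exact: unit_r.
    have cgc : composable Gp g c by rewrite /composable rc.
    by exists (m g c); rewrite gsrc_mul // grng_mul.
  move=> [_ [c [Vc rc]]]; split; first exact: unit_s.
  have cgc : composable Gp (iv g) c by rewrite /composable gsrc_inv rc.
  by exists (m (iv g) c); rewrite gsrc_mul // grng_mul // grng_inv.
have oiU : open_in_units Gp Uu.
  exists Uu; split => //; apply/seteqP; split => [u Uu_u|u []//].
  by split => //; case: Uu_u.
have eU : Uu = U0.
  case: (mini Uu oiU invU) => // U0e; exfalso.
  have : Uu v0.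
    by split; [exact: V0U | exists v0; split; [rewrite units_s //; exact: V0U | exact: V0U]].
  by rewrite U0e.
set D := [set C : set G | compact_open_bisection Gp C /\ C `<=` s @^-1` V0].
have cov : S `<=` cover D (fun C => r @` C).
  move=> u Su; have : Uu u by rewrite eU; exact: SU.
  move=> [_ [g [Vsg rg]]].
  have [C [cobC [Cg CP]]] := amp (s @^-1` V0) g oP Vsg.
  by exists C => //; exists g.
have [D' sD' cov'] := my_cover cS (fun C (DC : D C) => rC_open C DC.1.2) cov.
have gen (L : seq (set G)) : (forall C, C \in L -> D C) ->
    let W := [set x | exists2 C, C \in L & (r @` C) x] in
    [/\ compact W, open W, W `<=` U0 & I (ind W 1)].
  elim: L => [|C L IH] HL W.
    have -> : W = set0 by apply/seteqP; split => // x [C]; rewrite in_nil.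
    split => //; [exact: compact0 | exact: open0 |].
    have -> : ind set0 1 = fun _ => 0 by apply: funext => x; rewrite indF.
    by case: idI => _ [].
  have HL' C' : C' \in L -> D C' by move=> C'in; apply: HL; rewrite in_cons C'in orbT.
  have [cW oW WU IW] := IH HL'.
  have [[cC bC] CP] := HL C (mem_head _ _).
  have -> : W = r @` C `|` [set x | exists2 C, C \in L & (r @` C) x].
    apply/seteqP; split => x.
      move=> [C' /[!in_cons] /orP [/eqP -> rx|C'in rx]]; first by left.
      by right; exists C'.
    case=> [rx|[C' C'in rx]]; first by exists C => //; exact: mem_head.
    by exists C' => //; rewrite in_cons C'in orbT.
  have cR : compact (r @` C) by apply: image_compact => //; exact: cont_r.
  have oR : open (r @` C) by exact: rC_open C bC.
  have RU : r @` C `<=` U0 by move=> _ [c _ <-]; exact: unit_r.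
  split.
  - exact: compactU.
  - exact: openU.
  - by move=> x [/RU|/WU].
  apply: ind_union => //; first exact: ind_steinberg.
  exact: (@ind_rC I V0 C idI IV V0U (conj cC bC) CP).
have [cW oW WU IW] := gen D' (fun C Cin => (set_mem (sD' C Cin))).
exists [set x | exists2 C, C \in (D' : seq _) & (r @` C) x]; split => //.
Qed.

Lemma minimal_simple : minimal Gp -> simple_algebra Gp sigma.
Proof.
move=> mini I idI.
have [[f [If [g0 fg0]]]|nz] := pselect (exists f, I f /\ exists x, f x != 0); last first.
  left; apply/seteqP; split.
    move=> f If; apply: funext => x; apply/eqP; apply: contraT => n; exfalso.
    by apply: nz; exists f; split => //; exists x.
  by move=> f ->; case: idI => _ [].
right; apply/seteqP; split; first by case: idI.
have [h [x [Ih Ux hx]]] := @to_unit I f g0 idI If fg0.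
have [V0 [cV0 oV0 V0U nV0 IV0]] := @unit_ind I h x idI Ih Ux hx.
move=> k [lk ck].
set S := s @` closure (fsupport k).
have cS : compact S by apply: image_compact => //; exact: cont_s.
have SU : S `<=` U0 by move=> _ [y _ <-]; exact: unit_s.
have [W [cW oW WU SW IW]] := @cover_units I V0 idI mini oV0 V0U nV0 IV0 S cS SU.
have -> : k = cv k (ind W 1).
  apply: funext => z; rewrite conv_indr //.
  have [kz|nkz] := eqVneq (k z) 0; first by rewrite kz mul0r.
  rewrite indT ?mulr1 //; apply: SW; exists z => //; exact: subset_closure.
by case: idI => _ [_ [_ /(_ k (ind W 1) (conj lk ck) IW) []]].
Qed.

Lemma main_iff : simple_algebra Gp sigma <-> minimal Gp.
Proof. by split; [exact: simple_minimal | exact: minimal_simple]. Qed.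

End Main.


Theorem theorem6p2 (F : fieldType) (G : topologicalType) (Gp : groupoid G)
  (sigma : G -> G -> F) :
  hausdorff_space G -> locally_compact [set: G] ->
  topological_groupoid Gp -> ample Gp -> effective Gp ->
  cocycle Gp sigma ->
  (simple_algebra Gp sigma <-> minimal Gp).
Proof.
move=> hT _ tG amp eff coc.
exact: (@main_iff F G Gp sigma hT tG coc amp eff).
Qed.
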